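(* Let $\operatorname{Li}_s(z)=\sum_{m=1}^\infty \frac{z^m}{m^s}$ denote the polylogarithm and $\zeta$ the Riemann zeta function. Then $$\int_0^1 \frac{\operatorname{Li}_4(-x)}{1 + x}\,dx = \frac{17}{16}\zeta (5) -\frac{3}{8}\zeta(2)\zeta(3) -\frac{7}{8}\log(2)\zeta(4).$$ *)

(* Defs.v *)
From Stdlib Require Import Reals.
From Coquelicot Require Import Coquelicot.
Open Scope R_scope.

Definition polylog (s : nat) (z : R) : R :=
  Series (fun n : nat => z ^ (S n) / (INR (S n)) ^ s).

Definition zeta (s : nat) : R :=
  Series (fun n : nat => / (INR (S n)) ^ s).

(* Main.v *)
Require Import Defs.
From Stdlib Require Import Reals Lra Lia.
From Coquelicot Require Import Coquelicot.
Open Scope R_scope.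

Fixpoint sm (f : nat -> R) (n : nat) : R :=
  match n with O => 0 | S k => sm f k + f (S k) end.

Lemma sm_ext (f g : nat -> R) n :
  (forall k, (1 <= k <= n)%nat -> f k = g k) -> sm f n = sm g n.
Proof.
  induction n; intros H; simpl; auto.
  rewrite IHn; [rewrite H; auto; lia|]. intros k Hk; apply H; lia.
Qed.

Lemma sm_plus f g n : sm (fun k => f k + g k) n = sm f n + sm g n.
Proof. induction n; simpl; [lra| rewrite IHn; lra]. Qed.

Lemma sm_scal c f n : sm (fun k => c * f k) n = c * sm f n.
Proof. induction n; simpl; [lra| rewrite IHn; lra]. Qed.

Lemma sm_shift f n : sm f (S n) = f 1%nat + sm (fun k => f (S k)) n.
Proof. induction n; simpl in *; [lra|]. rewrite IHn; lra. Qed.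

Lemma sm_rev g N : sm (fun n => g (N + 1 - n)%nat) N = sm g N.
Proof.
  revert g; induction N; intros g; simpl; auto.
  change (sm (fun n : nat => g (S N + 1 - n)%nat) N + g (S N + 1 - S N)%nat = sm g (S N)).
  rewrite (sm_shift g N).
  rewrite (sm_ext (fun n : nat => g (S N + 1 - n)%nat)
     (fun n => (fun m => g (S m)) (N+1 - n)%nat)).
  2:{ intros k Hk; f_equal; lia. }
  rewrite (IHN (fun m => g (S m))).
  replace (S N + 1 - S N)%nat with 1%nat by lia. lra.
Qed.

Lemma sm_le f g n : (forall k, (1 <= k <= n)%nat -> f k <= g k) -> sm f n <= sm g n.
Proof.
  induction n; intros H; simpl; [lra|].
  assert (sm f n <= sm g n) by (apply IHn; intros; apply H; lia).
  assert (f (S n) <= g (S n)) by (apply H; lia). lra.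
Qed.

Lemma sm_abs f n : Rabs (sm f n) <= sm (fun k => Rabs (f k)) n.
Proof.
  induction n; simpl. rewrite Rabs_R0; lra.
  eapply Rle_trans; [apply Rabs_triang|]. lra.
Qed.

Lemma sm_sum_f f n : sm f (S n) = sum_f_R0 (fun k => f (S k)) n.
Proof. induction n; simpl in *; [lra|]. rewrite IHn; lra. Qed.

Lemma sm_sum_n f n : sm f (S n) = sum_n (fun k => f (S k)) n.
Proof. rewrite sum_n_Reals; apply sm_sum_f. Qed.

Lemma m1sq k : (-1) ^ k * (-1) ^ k = 1.
Proof. rewrite <- pow_add. replace (k+k)%nat with (2*k)%nat by lia. rewrite pow_1_even; auto. Qed.

Lemma m1abs k : Rabs ((-1) ^ k) = 1.
Proof. rewrite <- RPow_abs, Rabs_m1, pow1; auto. Qed.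

Lemma INR_S_pos n : 0 < INR (S n).
Proof. apply lt_0_INR; lia. Qed.
Definition P (s N : nat) : R := sm (fun m => (-1) ^ m / INR m ^ s) N.
Definition H (s N : nat) : R := sm (fun m => / INR m ^ s) N.
Definition T (N : nat) : R := sm (fun n => / INR n ^ 4 * P 1 (N - n)) N.
Definition Y (N : nat) : R := sm (fun k => P 1 (pred k) / INR k ^ 4) N.

Lemma pf_id a b s t : 0 < a -> 0 < b ->
  / a ^ 4 * (s * t / b) =
  s / (a + b) * (t / a ^ 4) + s / (a + b) ^ 2 * (t / a ^ 3) +
  s / (a + b) ^ 3 * (t / a ^ 2) + s / (a + b) ^ 4 * (t / a) +
  / (a + b) ^ 4 * (s * t / b).
Proof. intros Ha Hb. field. lra. Qed.

Lemma diag N :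
  sm (fun n => / INR n ^ 4 * ((-1) ^ (S (N - n)) / INR (S (N - n)))) N =
  (-1) ^ (S N) / INR (S N) * P 4 N + (-1) ^ (S N) / INR (S N) ^ 2 * P 3 N +
  (-1) ^ (S N) / INR (S N) ^ 3 * P 2 N + (-1) ^ (S N) / INR (S N) ^ 4 * P 1 N +
  / INR (S N) ^ 4 * P 1 N.
Proof.
  set (k := S N).
  assert (E : forall n, (1 <= n <= N)%nat ->
    / INR n ^ 4 * ((-1) ^ (S (N - n)) / INR (S (N - n))) =
    (-1) ^ k / INR k * ((-1) ^ n / INR n ^ 4) + (-1) ^ k / INR k ^ 2 * ((-1) ^ n / INR n ^ 3) +
    (-1) ^ k / INR k ^ 3 * ((-1) ^ n / INR n ^ 2) + (-1) ^ k / INR k ^ 4 * ((-1) ^ n / INR n ^ 1) +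
    / INR k ^ 4 * ((-1) ^ (N + 1 - n) / INR (N + 1 - n))).
  { intros n Hn.
    replace (N + 1 - n)%nat with (S (N - n)) by lia.
    assert (Ek : INR k = INR n + INR (S (N - n))) by (rewrite <- plus_INR; f_equal; unfold k; lia).
    assert (Es : (-1) ^ (S (N - n)) = (-1) ^ k * (-1) ^ n).
    { replace k with (S (N - n) + n)%nat by (unfold k; lia). rewrite pow_add.
      rewrite Rmult_assoc, m1sq; ring. }
    rewrite Ek, Es, pow_1.
    apply pf_id; apply lt_0_INR; lia. }
  rewrite (sm_ext _ _ N E).
  rewrite !sm_plus, !sm_scal.
  rewrite (sm_rev (fun m => (-1) ^ m / INR m)).
  unfold P. f_equal. f_equal. apply sm_ext; intros; rewrite pow_1; auto.
Qed.
Lemma sm_S f n : sm f (S n) = sm f n + f (S n).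
Proof. reflexivity. Qed.

Lemma P_S a N : P a (S N) = P a N + (-1) ^ (S N) / INR (S N) ^ a.
Proof. reflexivity. Qed.

Lemma P_0 a : P a 0 = 0.
Proof. reflexivity. Qed.

Lemma T_S N : T (S N) = T N +
  sm (fun n => / INR n ^ 4 * ((-1) ^ (S (N - n)) / INR (S (N - n)))) N.
Proof.
  unfold T. rewrite sm_S. cbv beta. replace (S N - S N)%nat with 0%nat by lia.
  rewrite P_0, Rmult_0_r, Rplus_0_r.
  rewrite <- sm_plus. apply sm_ext. intros n Hn.
  replace (S N - n)%nat with (S (N - n)) by lia. rewrite P_S, pow_1. ring.
Qed.

Lemma Y_id N : Y N = T N - P 1 N * P 4 N - P 2 N * P 3 N + 2 * H 5 N.
Proof.
  induction N.
  - unfold Y, T, P, H; simpl; ring.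
  - change (Y (S N)) with (Y N + P 1 (pred (S N)) / INR (S N) ^ 4).
    rewrite T_S, diag.  rewrite !P_S, IHN. simpl pred.
    change (H 5 (S N)) with (H 5 N + / INR (S N) ^ 5).
    assert (Hx : 0 < INR (S N)) by apply INR_S_pos.
    set (x := INR (S N)) in *.
    assert (Hs := m1sq (S N)).
    set (s := (-1) ^ (S N)) in *.
    field_simplify; [|lra..].
    replace (s ^ 2) with 1 by (rewrite <- Hs; ring).
    field; lra.
Qed.
Definition IN (N : nat) : R := sm (fun m => (ln 2 + P 1 m) / INR m ^ 4) N.

Lemma IN_id N : IN N = ln 2 * H 4 N + Y N + P 5 N.
Proof.
  induction N.
  - unfold IN, H, Y, P; simpl; ring.
  - change (IN (S N)) with (IN N + (ln 2 + P 1 (S N)) / INR (S N) ^ 4).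
    change (H 4 (S N)) with (H 4 N + / INR (S N) ^ 4).
    change (Y (S N)) with (Y N + P 1 (pred (S N)) / INR (S N) ^ 4).
    rewrite !P_S, IHN. simpl pred.
    assert (Hx : 0 < INR (S N)) by apply INR_S_pos.
    field; lra.
Qed.

Lemma E_id N : ln 2 * H 4 N + T N = sm (fun n => / INR n ^ 4 * (ln 2 + P 1 (N - n))) N.
Proof.
  unfold H, T. rewrite <- sm_scal, <- sm_plus. apply sm_ext; intros; ring.
Qed.

Definition J (m : nat) : R := (-1) ^ m * (ln 2 + P 1 m).

Lemma J_S m : J (S m) = / INR (S m) - J m.
Proof.
  unfold J. rewrite P_S.
  assert (Hx : 0 < INR (S m)) by apply INR_S_pos.
  assert (Hs := m1sq m).
  transitivity (- ((-1) ^ m * (ln 2 + P 1 m)) + ((-1) ^ m * (-1) ^ m) / INR (S m)).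
  - change ((-1) ^ (S m)) with (-1 * (-1) ^ m). rewrite pow_1. field. lra.
  - rewrite Hs. field. lra.
Qed.

Lemma RInt_pow m : is_RInt (fun x => x ^ m) 0 1 (/ INR (S m)).
Proof.
  assert (Hx : 0 < INR (S m)) by apply INR_S_pos.
  replace (/ INR (S m)) with (minus (1 ^ (S m) / INR (S m)) (0 ^ (S m) / INR (S m))).
  2:{ rewrite pow1, pow_i by lia. unfold minus, plus, opp; cbn -[INR]. field. lra. }
  apply (is_RInt_derive (fun x => x ^ (S m) / INR (S m))).
  - intros x _. set (c := INR (S m)) in *. auto_derive; auto. change (match m with 0%nat => 1 | S _ => INR m + 1 end) with (INR (S m)). fold c. field. lra.
  - intros x _. apply (ex_derive_continuous (fun y => y ^ m)). auto_derive; auto.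
Qed.
Lemma RInt_J m : is_RInt (fun x => x ^ m / (1 + x)) 0 1 (J m).
Proof.
  induction m.
  - replace (J 0) with (minus (ln (1 + 1)) (ln (1 + 0))).
    2:{ unfold J, minus, plus, opp; cbn -[INR ln]. rewrite Rplus_0_r, ln_1.
        replace (1+1) with 2 by ring. unfold P; simpl; ring. }
    apply (is_RInt_ext (fun x => / (1 + x))).
    { intros x Hx. simpl. field. rewrite Rmin_left, Rmax_right in Hx; lra. }
    apply (is_RInt_derive (fun x => ln (1 + x))).
    + intros x Hx. rewrite Rmin_left, Rmax_right in Hx by lra.
      auto_derive. lra. field. lra.
    + intros x Hx. rewrite Rmin_left, Rmax_right in Hx by lra.
      apply (ex_derive_continuous (fun y => / (1 + y))). auto_derive. lra.
  - rewrite J_S.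
    apply (is_RInt_ext (fun x => minus (x ^ m) (x ^ m / (1 + x)))).
    { intros x Hx. rewrite Rmin_left, Rmax_right in Hx by lra.
      unfold minus, plus, opp; simpl. field. lra. }
    apply (is_RInt_minus _ _ _ _ _ _ (RInt_pow m) IHm).
Qed.

Lemma J_ge0 m : 0 <= J m.
Proof.
  apply (is_RInt_ge_0 _ 0 1 _ ltac:(lra) (RInt_J m)).
  intros x Hx. apply Rmult_le_pos. apply pow_le; lra.
  apply Rlt_le, Rinv_0_lt_compat; lra.
Qed.

Lemma J_le m : J m <= / INR (S m).
Proof. pose proof (J_ge0 (S m)). rewrite J_S in H0. lra. Qed.

Lemma r_bound m : Rabs (ln 2 + P 1 m) <= / INR (S m).
Proof.
  replace (ln 2 + P 1 m) with ((-1) ^ m * J m).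
  2:{ unfold J. rewrite <- Rmult_assoc, m1sq. ring. }
  rewrite Rabs_mult, m1abs, Rabs_pos_eq by apply J_ge0. rewrite Rmult_1_l. apply J_le.
Qed.
Lemma lim_inv : is_lim_seq (fun n => / INR (S n)) 0.
Proof.
  assert (H0 := is_lim_seq_inv _ _ (proj1 (is_lim_seq_incr_1 INR p_infty) is_lim_seq_INR)
    ltac:(discriminate)).
  simpl in H0. exact H0.
Qed.

Lemma lim_0_bound (u : nat -> R) c : (forall n, Rabs (u n) <= c * / INR (S n)) ->
  is_lim_seq u 0.
Proof.
  intros Hb. apply (is_lim_seq_le_le (fun n => - (c * / INR (S n))) u (fun n => c * / INR (S n))).
  - intros n. specialize (Hb n). apply Rabs_le_between in Hb. lra.
  - assert (h := is_lim_seq_scal_l _ (- c) _ lim_inv). simpl in h. rewrite Rmult_0_r in h.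
    apply (is_lim_seq_ext _ _ _ (fun n => ltac:(ring) : - c * / INR (S n) = - (c * / INR (S n)))) in h.
    exact h.
  - assert (h := is_lim_seq_scal_l _ c _ lim_inv). simpl in h. rewrite Rmult_0_r in h. exact h.
Qed.

Lemma H2_bound N : H 2 (S N) <= 2 - / INR (S N).
Proof.
  induction N.
  - unfold H; simpl. lra.
  - change (H 2 (S (S N))) with (H 2 (S N) + / INR (S (S N)) ^ 2).
    assert (Hx : 0 < INR (S N)) by apply INR_S_pos.
    rewrite (S_INR (S N)) in *.
    set (x := INR (S N)) in *.
    assert (/ (x + 1) ^ 2 <= / x - / (x + 1)).
    { replace (/ x - / (x + 1)) with (/ (x * (x + 1))) by (field; lra).
      apply Rinv_le_contravar. nra. nra. }
    lra.
Qed.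

Lemma H_le s N : (2 <= s)%nat -> H s N <= H 2 N.
Proof.
  intros Hs. apply sm_le. intros k Hk.
  assert (1 <= INR k) by (apply (le_INR 1); lia).
  apply Rinv_le_contravar. apply pow_lt; lra. apply Rle_pow; auto.
Qed.

Lemma H_nonneg s N : 0 <= H s N.
Proof.
  induction N; unfold H in *; [simpl; lra|]. rewrite sm_S.
  assert (0 < INR (S N)) by apply INR_S_pos.
  assert (0 < / INR (S N) ^ s) by (apply Rinv_0_lt_compat, pow_lt; lra). lra.
Qed.

Lemma zeta_lim s : (2 <= s)%nat -> is_lim_seq (H s) (zeta s).
Proof.
  intros Hs.
  assert (Hex : ex_finite_lim_seq (fun n => H s (S n))).
  { apply (ex_finite_lim_seq_incr _ 2).
    - intros n. change (H s (S (S n))) with (H s (S n) + / INR (S (S n)) ^ s).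
      assert (0 < INR (S (S n))) by apply INR_S_pos.
      assert (0 < / INR (S (S n)) ^ s) by (apply Rinv_0_lt_compat, pow_lt; lra). lra.
    - intros n. eapply Rle_trans. apply H_le; auto. eapply Rle_trans. apply H2_bound.
      assert (0 < / INR (S n)) by (apply Rinv_0_lt_compat, INR_S_pos). lra. }
  destruct Hex as [l Hl].
  assert (Hser : is_series (fun n => / INR (S n) ^ s) l).
  { apply (is_lim_seq_ext _ _ _ (fun n => eq_trans (sm_sum_n _ n) eq_refl)) in Hl. exact Hl. }
  unfold zeta. rewrite (is_series_unique _ _ Hser).
  apply is_lim_seq_incr_1. exact Hl.
Qed.
Lemma P_even s M : P s (2 * M) = - H s (2 * M) + 2 / 2 ^ s * H s M.
Proof.
  induction M.
  - unfold P, H; simpl; ring.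
  - replace (2 * S M)%nat with (S (S (2 * M))) by lia.
    rewrite !P_S, IHM.
    change (H s (S (S (2 * M)))) with (H s (S (2 * M)) + / INR (S (S (2 * M))) ^ s).
    change (H s (S (2 * M))) with (H s (2 * M) + / INR (S (2 * M)) ^ s).
    change (H s (S M)) with (H s M + / INR (S M) ^ s).
    replace ((-1) ^ (S (2 * M))) with (-1) by (change ((-1) ^ (S (2 * M))) with (-1 * (-1) ^ (2 * M)); rewrite pow_1_even; ring).
    replace ((-1) ^ (S (S (2 * M)))) with 1 by (change ((-1) ^ (S (S (2 * M)))) with (-1 * (-1 * (-1) ^ (2 * M))); rewrite pow_1_even; ring).
    replace (INR (S (S (2 * M)))) with (2 * INR (S M)) by (rewrite !S_INR, mult_INR; simpl; ring).
    rewrite Rpow_mult_distr.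
    assert (0 < INR (S M)) by apply INR_S_pos.
    assert (0 < INR (S (2 * M))) by apply INR_S_pos.
    assert (0 < 2 ^ s) by (apply pow_lt; lra).
    assert (0 < INR (S M) ^ s) by (apply pow_lt; lra).
    assert (0 < INR (S (2 * M)) ^ s) by (apply pow_lt; lra).
    field. lra.
Qed.

Lemma double_ev : filterlim (fun n : nat => (2 * n)%nat) eventually eventually.
Proof.
  intros Q [N HN]. exists N. intros n Hn. apply HN. lia.
Qed.

Lemma Pev_lim s : (2 <= s)%nat ->
  is_lim_seq (fun M => P s (2 * M)) ((-1 + 2 / 2 ^ s) * zeta s).
Proof.
  intros Hs.
  apply (is_lim_seq_ext (fun M => - H s (2 * M) + 2 / 2 ^ s * H s M)).
  { intros M. rewrite P_even; auto. }
  replace ((-1 + 2 / 2 ^ s) * zeta s) with (- zeta s + 2 / 2 ^ s * zeta s) by ring.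
  apply is_lim_seq_plus'.
  - apply (is_lim_seq_opp (fun M => H s (2 * M)) (zeta s)).
    apply (is_lim_seq_subseq (H s) (zeta s) (fun n => (2 * n)%nat) double_ev (zeta_lim s Hs)).
  - assert (h := is_lim_seq_scal_l _ (2 / 2 ^ s) _ (zeta_lim s Hs)). exact h.
Qed.

Lemma P1_lim : is_lim_seq (P 1) (- ln 2).
Proof.
  assert (h : is_lim_seq (fun n => ln 2 + P 1 n) 0).
  { apply (lim_0_bound _ 1). intros n. rewrite Rmult_1_l. apply r_bound. }
  apply (is_lim_seq_ext (fun n => (ln 2 + P 1 n) - ln 2)). intros; ring.
  replace (- ln 2) with (0 - ln 2) by ring.
  apply is_lim_seq_minus'; auto. apply is_lim_seq_const.
Qed.

Definition E (N : nat) : R := sm (fun n => / INR n ^ 4 * (ln 2 + P 1 (N - n))) N.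

Lemma E_bound N : Rabs (E N) <= 4 * / INR (S N).
Proof.
  destruct N as [|N].
  - unfold E; simpl. rewrite Rabs_R0. assert (0 < / INR 1) by (apply Rinv_0_lt_compat, INR_S_pos). lra.
  - unfold E. eapply Rle_trans. apply sm_abs.
    eapply Rle_trans. apply (sm_le _ (fun n => / INR n ^ 2 * / INR (S N))).
    { intros n Hn. rewrite Rabs_mult.
      assert (Hn1 : 1 <= INR n) by (apply (le_INR 1); lia).
      assert (Hnb : INR n <= INR (S N)) by (apply le_INR; lia).
      rewrite Rabs_pos_eq by (apply Rlt_le, Rinv_0_lt_compat, pow_lt; lra).
      eapply Rle_trans. apply Rmult_le_compat_l. apply Rlt_le, Rinv_0_lt_compat, pow_lt; lra.
      apply r_bound.
      replace (INR (S (S N - n))) with (INR (S N) - INR n + 1).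
      2:{ rewrite (S_INR (S N - n)), minus_INR by lia. ring. }
      set (a := INR n) in *. set (b := INR (S N)) in *.
      rewrite <- Rinv_mult, <- Rinv_mult.
      apply Rinv_le_contravar. apply Rmult_lt_0_compat; [apply pow_lt|]; lra.
      assert (a * (b - a + 1) >= b) by nra.
      assert (a ^ 4 * (b - a + 1) = a ^ 3 * (a * (b - a + 1))) by ring.
      assert (a ^ 3 * (a * (b - a + 1)) >= a ^ 3 * b) by (apply Rmult_ge_compat_l; [apply Rle_ge, pow_le|]; lra).
      assert (a ^ 3 >= a ^ 2) by (apply Rle_ge; apply Rle_pow; [lra| lia]).
      assert (a ^ 3 * b >= a ^ 2 * b) by (apply Rmult_ge_compat_r; lra).
      lra. }
    rewrite (sm_ext _ (fun n => / INR (S N) * / INR n ^ 2)) by (intros; ring).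
    rewrite sm_scal. fold (H 2 (S N)).
    assert (h1 := H2_bound N).
    assert (h0 := H_nonneg 2 (S N)).
    assert (Hx : 0 < INR (S N)) by apply INR_S_pos.
    rewrite (S_INR (S N)).
    assert (/ INR (S N) <= 2 * / (INR (S N) + 1)).
    { assert (1 <= INR (S N)) by (apply (le_INR 1); lia).
      replace (2 * / (INR (S N) + 1)) with (/ INR (S N) + (INR (S N) - 1) / (INR (S N) * (INR (S N) + 1))) by (field; lra).
      assert (0 <= (INR (S N) - 1) / (INR (S N) * (INR (S N) + 1))).
      { apply Rdiv_le_0_compat; nra. }
      lra. }
    assert (0 < / INR (S N)) by (apply Rinv_0_lt_compat; lra).
    nra.
Qed.
Definition Lval : R := 17/16 * zeta 5 - 3/8 * zeta 2 * zeta 3 - 7/8 * ln 2 * zeta 4.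

Lemma IN_decomp N : IN N = E N - P 1 N * P 4 N - P 2 N * P 3 N + 2 * H 5 N + P 5 N.
Proof.
  rewrite IN_id, Y_id. unfold E. rewrite <- E_id. ring.
Qed.

Lemma IN_ev_lim : is_lim_seq (fun M => IN (2 * M)) Lval.
Proof.
  apply (is_lim_seq_ext (fun M => E (2 * M) - P 1 (2 * M) * P 4 (2 * M) - P 2 (2 * M) * P 3 (2 * M)
     + 2 * H 5 (2 * M) + P 5 (2 * M))).
  { intros; rewrite IN_decomp; auto. }
  assert (hE : is_lim_seq (fun M => E (2 * M)) 0).
  { apply (is_lim_seq_subseq E 0 _ double_ev). apply (lim_0_bound _ 4). apply E_bound. }
  assert (h1 : is_lim_seq (fun M => P 1 (2 * M)) (- ln 2)).
  { apply (is_lim_seq_subseq (P 1) _ _ double_ev P1_lim). }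
  assert (h5 : is_lim_seq (fun M => H 5 (2 * M)) (zeta 5)).
  { apply (is_lim_seq_subseq (H 5) _ _ double_ev). apply zeta_lim; lia. }
  assert (p2 := Pev_lim 2 ltac:(lia)).
  assert (p3 := Pev_lim 3 ltac:(lia)).
  assert (p4 := Pev_lim 4 ltac:(lia)).
  assert (p5 := Pev_lim 5 ltac:(lia)).
  assert (h2 := is_lim_seq_scal_l _ 2 _ h5). simpl in h2.
  replace Lval with (0 - (- ln 2) * ((-1 + 2 / 2 ^ 4) * zeta 4)
      - ((-1 + 2 / 2 ^ 2) * zeta 2) * ((-1 + 2 / 2 ^ 3) * zeta 3)
      + 2 * zeta 5 + (-1 + 2 / 2 ^ 5) * zeta 5).
  2:{ unfold Lval. simpl. field. }
  apply is_lim_seq_plus'; [|exact p5].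
  apply is_lim_seq_plus'; [|exact h2].
  apply is_lim_seq_minus'; [|apply is_lim_seq_mult'; assumption].
  apply is_lim_seq_minus'; [exact hE|apply is_lim_seq_mult'; assumption].
Qed.
Definition clamp (x : R) : R := Rmax 0 (Rmin 1 x).

Lemma clamp_range x : 0 <= clamp x <= 1.
Proof. unfold clamp. split. apply Rmax_l. apply Rmax_lub. lra. apply Rmin_l. Qed.

Lemma clamp_id x : 0 <= x <= 1 -> clamp x = x.
Proof. intros Hx. unfold clamp. rewrite Rmin_right by lra. rewrite Rmax_right by lra. auto. Qed.

Definition fN (N : nat) (x : R) : R := sm (fun m => (- clamp x) ^ m / INR m ^ 4) N / (1 + clamp x).
Definition gF (x : R) : R := polylog 4 (- clamp x) / (1 + clamp x).

Lemma RInt_partial N :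
  is_RInt (fun x => sm (fun m => (- x) ^ m / INR m ^ 4) N / (1 + x)) 0 1 (IN N).
Proof.
  induction N.
  - apply (is_RInt_ext (fun _ => 0)).
    { intros x Hx. rewrite Rmin_left, Rmax_right in Hx by lra. simpl. field. lra. }
    pose proof (is_RInt_const (V := R_NormedModule) 0 1 0) as h.
    replace (IN 0) with (scal (1 - 0) (0:R)). exact h. unfold scal; simpl; unfold mult; simpl. unfold IN; simpl; ring.
  - apply (is_RInt_ext (fun x => plus (sm (fun m => (- x) ^ m / INR m ^ 4) N / (1 + x))
              (scal ((-1) ^ (S N) / INR (S N) ^ 4) (x ^ (S N) / (1 + x))))).
    { intros x Hx. rewrite Rmin_left, Rmax_right in Hx by lra.
      rewrite sm_S.
      assert (0 < INR (S N)) by apply INR_S_pos.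
      set (k := INR (S N)) in *.
      unfold plus, scal; simpl; unfold mult; simpl.
      replace (- x) with (-1 * x) by ring. rewrite Rpow_mult_distr.
      field. split; lra. }
    replace (IN (S N)) with (plus (IN N) (scal ((-1) ^ (S N) / INR (S N) ^ 4) (J (S N)))).
    + apply (is_RInt_plus (V := R_NormedModule)); auto. apply (is_RInt_scal (V := R_NormedModule)). apply RInt_J.
    + change (IN (S N)) with (IN N + (ln 2 + P 1 (S N)) / INR (S N) ^ 4).
      assert (0 < INR (S N)) by apply INR_S_pos.
      assert (Hs := m1sq (S N)).
      set (k := INR (S N)) in *. set (sg := (-1) ^ (S N)) in *.
      unfold plus, scal; simpl; unfold mult; simpl. unfold J. fold sg.
      transitivity (IN N + (sg * sg) * (ln 2 + P 1 (S N)) / k ^ 4).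
      * field. lra.
      * rewrite Hs. field. lra.
Qed.

Lemma RInt_fN N : is_RInt (fN N) 0 1 (IN N).
Proof.
  apply (is_RInt_ext (fun x => sm (fun m => (- x) ^ m / INR m ^ 4) N / (1 + x))).
  2: apply RInt_partial.
  intros x Hx. rewrite Rmin_left, Rmax_right in Hx by lra.
  unfold fN. rewrite clamp_id by lra. auto.
Qed.
Lemma zeta_series s : (2 <= s)%nat -> is_series (fun n => / INR (S n) ^ s) (zeta s).
Proof.
  intros Hs. assert (h := proj1 (is_lim_seq_incr_1 _ _) (zeta_lim s Hs)).
  apply (is_lim_seq_ext _ _ _ (fun n => sm_sum_n (fun m => / INR m ^ s) n)) in h.
  exact h.
Qed.

Lemma tail_bound (y : R) N : 0 <= y <= 1 -> (0 < N)%nat ->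
  Rabs (polylog 4 (- y) - sm (fun m => (- y) ^ m / INR m ^ 4) N) <= zeta 4 - H 4 N.
Proof.
  intros Hy HN.
  set (a := fun n : nat => (- y) ^ (S n) / INR (S n) ^ 4).
  set (z := fun n : nat => / INR (S n) ^ 4).
  assert (Hz : ex_series z) by (eexists; apply zeta_series; lia).
  assert (Haz : forall n, Rabs (a n) <= z n).
  { intros n. unfold a, z. rewrite Rabs_div.
    2:{ apply pow_nonzero. apply Rgt_not_eq, INR_S_pos. }
    rewrite <- RPow_abs, (Rabs_pos_eq (INR (S n) ^ 4)).
    2:{ apply pow_le, Rlt_le, INR_S_pos. }
    rewrite Rabs_Ropp, Rabs_pos_eq by lra.
    unfold Rdiv. rewrite <- (Rmult_1_l (/ INR (S n) ^ 4)) at 2.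
    apply Rmult_le_compat_r. apply Rlt_le, Rinv_0_lt_compat, pow_lt, INR_S_pos.
    rewrite <- (pow1 (S n)). apply pow_incr; lra. }
  assert (Ha : ex_series a).
  { apply (ex_series_le (K := R_AbsRing) (V := R_CompleteNormedModule) _ z); auto. }
  destruct N as [|N]; [lia|].
  unfold polylog. fold a.
  rewrite (Series_incr_n a (S N)) by (auto; lia).
  rewrite sm_sum_f. simpl pred.
  replace (sum_f_R0 a N + Series (fun k => a (S N + k)%nat) -
     sum_f_R0 (fun k => (- y) ^ S k / INR (S k) ^ 4) N) with (Series (fun k => a (S N + k)%nat))
    by (unfold a; ring).
  unfold zeta. fold z.
  rewrite (Series_incr_n z (S N)) by (auto; lia).
  unfold H. rewrite sm_sum_f. simpl pred.
  replace (sum_f_R0 z N + Series (fun k => z (S N + k)%nat) -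
     sum_f_R0 (fun k => / INR (S k) ^ 4) N) with (Series (fun k => z (S N + k)%nat))
    by (unfold z; ring).
  assert (Hzt : ex_series (fun k => z (S N + k)%nat)) by (apply ex_series_incr_n; auto).
  assert (Hat : ex_series (fun k => Rabs (a (S N + k)%nat))).
  { apply (ex_series_le (K := R_AbsRing) (V := R_CompleteNormedModule) _ (fun k => z (S N + k)%nat)); auto.
    intros n. unfold norm; simpl. unfold abs; simpl. rewrite Rabs_Rabsolu. apply Haz. }
  eapply Rle_trans. apply Series_Rabs; auto.
  apply Series_le; auto. intros n. split. apply Rabs_pos. apply Haz.
Qed.
Lemma fN_unif : filterlim fN eventually (locally (gF : fct_UniformSpace R R_UniformSpace)).
Proof.
  apply filterlim_locally. intros eps.
  assert (h := proj2 (is_lim_seq_spec _ _) (zeta_lim 4 ltac:(lia)) eps).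
  simpl in h. destruct h as [N0 HN0].
  exists (S N0). intros N HN.
  intro t. unfold ball; simpl. unfold AbsRing_ball, abs, minus, plus, opp; simpl.
  assert (Hc := clamp_range t).
  assert (Htb := tail_bound (clamp t) N Hc ltac:(lia)).
  assert (Hz := HN0 N ltac:(lia)).
  assert (Hh : H 4 N <= zeta 4).
  { apply (is_lim_seq_incr_compare (H 4) (zeta 4) (zeta_lim 4 ltac:(lia))).
    intros n. change (H 4 (S n)) with (H 4 n + / INR (S n) ^ 4).
    assert (0 < / INR (S n) ^ 4) by (apply Rinv_0_lt_compat, pow_lt, INR_S_pos). lra. }
  rewrite Rabs_minus_sym in Hz. rewrite Rabs_pos_eq in Hz by lra.
  unfold fN, gF.
  replace (sm (fun m => (- clamp t) ^ m / INR m ^ 4) N / (1 + clamp t) + - (polylog 4 (- clamp t) / (1 + clamp t)))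
    with (- (polylog 4 (- clamp t) - sm (fun m => (- clamp t) ^ m / INR m ^ 4) N) * / (1 + clamp t))
    by (field; lra).
  rewrite Rabs_mult, Rabs_Ropp, (Rabs_pos_eq (/ (1 + clamp t))) by (apply Rlt_le, Rinv_0_lt_compat; lra).
  assert (/ (1 + clamp t) <= 1).
  { rewrite <- Rinv_1. apply Rinv_le_contravar; lra. }
  assert (0 <= Rabs (polylog 4 (- clamp t) - sm (fun m => (- clamp t) ^ m / INR m ^ 4) N)) by apply Rabs_pos.
  assert (0 < / (1 + clamp t)) by (apply Rinv_0_lt_compat; lra).
  nra.
Qed.

Theorem mainTheorem5 :
  is_RInt (fun x : R => polylog 4 (- x) / (1 + x)) 0 1
    (17/16 * zeta 5 - 3/8 * zeta 2 * zeta 3 - 7/8 * ln 2 * zeta 4).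
Proof.
  destruct (filterlim_RInt (V := R_CompleteNormedModule) fN 0 1 eventually _ gF IN RInt_fN fN_unif)
    as [If [HIf HgI]].
  assert (HI : is_lim_seq IN If) by exact HIf.
  assert (HI2 := is_lim_seq_subseq IN If _ double_ev HI).
  assert (Heq : Finite If = Finite Lval).
  { rewrite <- (is_lim_seq_unique _ _ HI2), <- (is_lim_seq_unique _ _ IN_ev_lim). reflexivity. }
  injection Heq as Heq. subst If.
  apply (is_RInt_ext gF).
  { intros x Hx. rewrite Rmin_left, Rmax_right in Hx by lra.
    unfold gF. rewrite clamp_id by lra. reflexivity. }
  exact HgI.
Qed.
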